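(* In the setting described in the context, if $\omega\in\mathbb{R}$ is an energy eigenvalue, then $$\omega=-\frac{ka+eQ\rho}{a^2+\rho^2}.$$
   Context: Fix real numbers $M>0$, $a$, $Q$ with $M^2=a^2+Q^2$ (extreme Kerr–Newman black hole of mass $M$, Kerr parameter $a$, charge $Q$) and put $\rho:=M$. Fix the rest mass $m>0$ and charge $e\in\mathbb{R}$ of a Dirac particle and a half-integer $k\in\{\pm\frac12,\pm\frac32,\dots\}$ (azimuthal quantum number). For $\omega,\lambda\in\mathbb{R}$ consider the radial system for $f=(f_1,f_2):(\rho,\infty)\to\mathbb{C}^2$, $$\begin{pmatrix}(r-\rho)\frac{d}{dr}+\frac{iV(r)}{r-\rho} & imr-\lambda\\ -imr-\lambda & (r-\rho)\frac{d}{dr}-\frac{iV(r)}{r-\rho}\end{pmatrix}f(r)=0,\qquad V(r):=\omega(r^2+a^2)+ka+eQr,$$ and the angular system for $g=(g_1,g_2):(0,\pi)\to\mathbb{C}^2$, $$\begin{pmatrix}\frac{d}{d\theta}+\frac{\cot\theta}{2}-W(\theta) & -am\cos\theta+\lambda\\ am\cos\theta+\lambda & -\frac{d}{d\theta}-\frac{\cot\theta}{2}-W(\theta)\end{pmatrix}g(\theta)=0,\qquad W(\theta):=a\omega\sin\theta+\frac{k}{\sin\theta}.$$ A number $\omega\in\mathbb{R}$ is called an energy eigenvalue (of the Dirac equation, for azimuthal quantum number $k$) if there exist $\lambda\in\mathbb{R}$ and nontrivial solutions $f$ of the radial system and $g$ of the angular system with $$\int_\rho^\infty|f(r)|^2\frac{r^2+a^2}{(r-\rho)^2}\,dr<\infty,\qquad\int_0^\pi|g(\theta)|^2\sin\theta\,d\theta<\infty.$$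 *)

(* Defs.v *)
From Stdlib Require Import Reals.
From Coquelicot Require Import Coquelicot.
Open Scope R_scope.

Definition Vpot (omega a k e Q r : R) : R :=
  omega * (r ^ 2 + a ^ 2) + k * a + e * Q * r.

Definition Wpot (omega a k theta : R) : R :=
  a * omega * sin theta + k / sin theta.

Definition radial_solution (rho omega lambda a k e Q m : R) (f1 f2 : R -> C) : Prop :=
  forall r, rho < r ->
    exists d1 d2 : C,
      is_derive f1 r d1 /\ is_derive f2 r d2 /\
      (RtoC (r - rho) * d1 + Ci * RtoC (Vpot omega a k e Q r / (r - rho)) * f1 r
         + (Ci * RtoC (m * r) - RtoC lambda) * f2 r = 0)%C /\
      ((- (Ci * RtoC (m * r)) - RtoC lambda) * f1 r
         + RtoC (r - rho) * d2 - Ci * RtoC (Vpot omega a k e Q r / (r - rho)) * f2 r = 0)%C.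

Definition angular_solution (omega lambda a k m : R) (g1 g2 : R -> C) : Prop :=
  forall th, 0 < th < PI ->
    exists d1 d2 : C,
      is_derive g1 th d1 /\ is_derive g2 th d2 /\
      (d1 + RtoC (cos th / sin th / 2) * g1 th - RtoC (Wpot omega a k th) * g1 th
         + RtoC (- (a * m * cos th) + lambda) * g2 th = 0)%C /\
      (RtoC (a * m * cos th + lambda) * g1 th
         - d2 - RtoC (cos th / sin th / 2) * g2 th - RtoC (Wpot omega a k th) * g2 th = 0)%C.

Definition sqnorm2 (u v : C) : R := Cmod u ^ 2 + Cmod v ^ 2.

Definition energy_eigenvalue (rho a Q m e k omega : R) : Prop :=
  exists (lambda : R) (f1 f2 g1 g2 : R -> C),
    radial_solution rho omega lambda a k e Q m f1 f2 /\
    (exists r, rho < r /\ (f1 r <> 0%C \/ f2 r <> 0%C)) /\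
    angular_solution omega lambda a k m g1 g2 /\
    (exists th, 0 < th < PI /\ (g1 th <> 0%C \/ g2 th <> 0%C)) /\
    ex_RInt_gen (fun r => sqnorm2 (f1 r) (f2 r) * (r ^ 2 + a ^ 2) / (r - rho) ^ 2)
      (at_right rho) (Rbar_locally p_infty) /\
    ex_RInt_gen (fun th => sqnorm2 (g1 th) (g2 th) * sin th)
      (at_right 0) (at_left PI).

Definition half_integer (k : R) : Prop := exists n : Z, k = IZR n + / 2.

(* Main.v *)
Require Import Defs.
From Stdlib Require Import Reals Lra Psatz.
From Coquelicot Require Import Coquelicot.
Open Scope R_scope.

Definition cre (f : R -> C) t := fst (f t).
Definition cim (f : R -> C) t := snd (f t).
Definition Nf (f1 f2 : R -> C) t := cre f1 t * cre f1 t + cim f1 t * cim f1 t + cre f2 t * cre f2 t + cim f2 t * cim f2 t.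
Definition pf (f1 f2 : R -> C) t := cre f1 t * cre f2 t + cim f1 t * cim f2 t.
Definition qf (f1 f2 : R -> C) t := cre f1 t * cim f2 t - cim f1 t * cre f2 t.

Lemma is_derive_fst (f : R -> C) x (l : C) :
  is_derive f x l -> is_derive (fun t => fst (f t)) x (fst l).
Proof.
  intros H. unfold is_derive in *.
  apply (filterdiff_comp f (fun t : C => fst t) _ (fun t : C => fst t) H).
  apply filterdiff_linear. apply is_linear_fst.
Qed.
Lemma is_derive_snd (f : R -> C) x (l : C) :
  is_derive f x l -> is_derive (fun t => snd (f t)) x (snd l).
Proof.
  intros H. unfold is_derive in *.
  apply (filterdiff_comp f (fun t : C => snd t) _ (fun t : C => snd t) H).
  apply filterdiff_linear. apply is_linear_snd.
Qed.
Lemma comp_eqs (x W mu lam : R) (d1 d2 F1 F2 : C) :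
  (RtoC x * d1 + Ci * RtoC W * F1 + (Ci * RtoC mu - RtoC lam) * F2 = 0)%C ->
  ((- (Ci * RtoC mu) - RtoC lam) * F1 + RtoC x * d2 - Ci * RtoC W * F2 = 0)%C ->
  x * fst d1 = W * snd F1 + mu * snd F2 + lam * fst F2 /\
  x * snd d1 = - W * fst F1 - mu * fst F2 + lam * snd F2 /\
  x * fst d2 = - mu * snd F1 + lam * fst F1 - W * snd F2 /\
  x * snd d2 = mu * fst F1 + lam * snd F1 + W * fst F2.
Proof.
  destruct d1 as [a1 b1], d2 as [a2 b2], F1 as [p1 q1], F2 as [p2 q2].
  unfold RtoC, Ci, Cplus, Cmult, Cminus, Copp, Cplus; simpl.
  intros H1 H2. injection H1 as E1 E2. injection H2 as E3 E4. simpl.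
  repeat split; nra.
Qed.

Lemma comp_deriv rho omega lambda a k e Q m f1 f2 t :
  radial_solution rho omega lambda a k e Q m f1 f2 -> rho < t ->
  let W := Vpot omega a k e Q t / (t - rho) in
  ex_derive (fun x => cre f1 x) t /\ ex_derive (fun x => cim f1 x) t /\
  ex_derive (fun x => cre f2 x) t /\ ex_derive (fun x => cim f2 x) t /\
  Derive (fun x => cre f1 x) t = (W * cim f1 t + m * t * cim f2 t + lambda * cre f2 t) / (t - rho) /\
  Derive (fun x => cim f1 x) t = (- W * cre f1 t - m * t * cre f2 t + lambda * cim f2 t) / (t - rho) /\
  Derive (fun x => cre f2 x) t = (- (m * t) * cim f1 t + lambda * cre f1 t - W * cim f2 t) / (t - rho) /\
  Derive (fun x => cim f2 x) t = (m * t * cre f1 t + lambda * cim f1 t + W * cre f2 t) / (t - rho).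
Proof.
  intros Hs Ht W.
  destruct (Hs t Ht) as [d1 [d2 [Hd1 [Hd2 [E1 E2]]]]].
  destruct (comp_eqs _ _ _ _ _ _ _ _ E1 E2) as [C1 [C2 [C3 C4]]].
  pose proof (is_derive_fst _ _ _ Hd1) as D1.
  pose proof (is_derive_snd _ _ _ Hd1) as D2.
  pose proof (is_derive_fst _ _ _ Hd2) as D3.
  pose proof (is_derive_snd _ _ _ Hd2) as D4.
  unfold cre, cim.
  repeat split; try (eexists; eassumption);
  (etransitivity; [apply is_derive_unique; first [exact D1|exact D2|exact D3|exact D4]|]);
  unfold W; simpl;
  first [rewrite <- C1 | rewrite <- C2 | rewrite <- C3 | rewrite <- C4]; field; lra.
Qed.

Definition Phif rho omega lambda a k e Q m V0 f1 f2 t :=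
  V0 * (Vpot omega a k e Q t * Nf f1 f2 t + 2 * (t - rho) * (m * t * pf f1 f2 t - lambda * qf f1 f2 t)).

Lemma N_deriv rho omega lambda a k e Q m f1 f2 t :
  radial_solution rho omega lambda a k e Q m f1 f2 -> rho < t ->
  is_derive (Nf f1 f2) t (4 / (t - rho) * (m * t * qf f1 f2 t + lambda * pf f1 f2 t)).
Proof.
  intros Hs Ht.
  destruct (comp_deriv _ _ _ _ _ _ _ _ _ _ t Hs Ht) as [X1 [X2 [X3 [X4 [E1 [E2 [E3 E4]]]]]]].
  unfold Nf. auto_derive.
  - repeat split; assumption.
  - rewrite E1, E2, E3, E4. unfold pf, qf. field. lra.
Qed.

Lemma Phi_deriv rho omega lambda a k e Q m V0 f1 f2 t :
  radial_solution rho omega lambda a k e Q m f1 f2 -> rho < t ->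
  is_derive (Phif rho omega lambda a k e Q m V0 f1 f2) t
    (V0 * ((2 * omega * t + e * Q) * Nf f1 f2 t + 2 * (m * t * pf f1 f2 t - lambda * qf f1 f2 t)
           + 2 * (t - rho) * m * pf f1 f2 t)).
Proof.
  intros Hs Ht.
  destruct (comp_deriv _ _ _ _ _ _ _ _ _ _ t Hs Ht) as [X1 [X2 [X3 [X4 [E1 [E2 [E3 E4]]]]]]].
  unfold Phif, Nf, pf, qf, Vpot. auto_derive.
  - repeat split; assumption.
  - rewrite E1, E2, E3, E4. unfold Vpot. field. lra.
Qed.
Lemma back_gronwall (Phi : R -> R) L r1 r2 : r1 <= r2 ->
  (forall t, r1 <= t <= r2 -> exists D, is_derive Phi t D /\ D <= L * Phi t) ->
  Phi r2 * exp (-(L*(r2-r1))) <= Phi r1.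
Proof.
  intros Hr H.
  set (Psi := fun t => Phi t * exp (-(L*t))).
  assert (HD : forall t, r1 <= t <= r2 -> exists D, is_derive Psi t D /\ D <= 0).
  { intros t Ht. destruct (H t Ht) as [D [HdD HD]].
    exists (D * exp (-(L*t)) + Phi t * (-L * exp (-(L*t)))). split.
    - unfold Psi. apply (is_derive_mult Phi (fun t => exp (-(L*t)))); auto.
      + apply (is_derive_comp exp (fun t => -(L*t))).
        * apply is_derive_exp.
        * auto_derive; auto; ring.
      + intros; apply Rmult_comm.
    - pose proof (exp_pos (-(L*t))). nra. }
  assert (Hmvt := MVT_gen Psi r1 r2 (fun t => Derive Psi t)).
  rewrite Rmin_left in Hmvt by lra. rewrite Rmax_right in Hmvt by lra.
  destruct Hmvt as [c [Hc Heq]].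
  - intros t Ht. destruct (HD t ltac:(lra)) as [D [HdD _]].
    rewrite (is_derive_unique _ _ _ HdD). exact HdD.
  - intros t Ht. destruct (HD t Ht) as [D [HdD _]].
    apply continuity_pt_filterlim. apply (ex_derive_continuous Psi t). exists D; exact HdD.
  - destruct (HD c Hc) as [D [HdD HD0]].
    rewrite (is_derive_unique _ _ _ HdD) in Heq.
    unfold Psi in Heq.
    assert (Phi r2 * exp (-(L*r2)) <= Phi r1 * exp (-(L*r1))) by nra.
    replace (-(L*(r2-r1))) with (-(L*r2) + L*r1) by ring.
    rewrite exp_plus.
    assert (E: exp (-(L*r1)) * exp (L*r1) = 1).
    { rewrite <- exp_plus. replace (-(L*r1) + L*r1) with 0 by ring. apply exp_0. }
    pose proof (exp_pos (L*r1)).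
    replace (Phi r1) with (Phi r1 * exp (-(L*r1)) * exp (L*r1)) by (rewrite Rmult_assoc, E; ring).
    rewrite <- Rmult_assoc. apply Rmult_le_compat_r; lra.
Qed.
Lemma not_int (F : R -> R) rho r1 c : rho < r1 -> 0 < c ->
  (forall t, rho < t -> 0 <= F t) ->
  (forall t, rho < t <= r1 -> c/(t-rho)^2 <= F t) ->
  ~ ex_RInt_gen F (at_right rho) (Rbar_locally p_infty).
Proof.
  intros Hr1 Hc Hpos Hlow [l Hl]. change R in l.
  assert (Hb : locally l (ball l 1)).
  { apply (locally_ball l (mkposreal 1 Rlt_0_1)). }
  specialize (Hl _ Hb). simpl in Hl.
  destruct Hl as [Q R' HQ HR Hall].
  destruct HQ as [eps Heps].
  destruct HR as [M HM].
  set (b := Rmax (M+1) (r1+1)).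
  assert (Hb1 : M < b) by (unfold b; pose proof (Rmax_l (M+1) (r1+1)); lra).
  assert (Hb2 : r1 + 1 <= b) by (unfold b; apply Rmax_r).
  set (K := Rabs l + 2 + c + c*(b-rho)/(r1-rho)^2).
  assert (HK : 0 < K).
  { unfold K. pose proof (Rabs_pos l).
    assert (0 <= c*(b-rho)/(r1-rho)^2).
    { apply Rmult_le_pos; [nra|]. apply Rlt_le, Rinv_0_lt_compat. nra. }
    lra. }
  set (eta := Rmin (Rmin (eps/2) ((r1-rho)/2)) (c/K)).
  assert (Heta0 : 0 < eta).
  { unfold eta. pose proof (cond_pos eps). apply Rmin_pos; [apply Rmin_pos|]; try lra.
    apply Rdiv_lt_0_compat; lra. }
  assert (Heta1 : eta <= eps/2) by (unfold eta; eapply Rle_trans; [apply Rmin_l|apply Rmin_l]).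
  assert (Heta2 : eta <= (r1-rho)/2) by (unfold eta; eapply Rle_trans; [apply Rmin_l|apply Rmin_r]).
  assert (Heta3 : eta <= c/K) by (unfold eta; apply Rmin_r).
  set (a := rho + eta).
  assert (HQa : Q a).
  { apply Heps.
    - unfold ball; simpl; unfold AbsRing_ball, abs, minus, plus, opp; simpl.
      unfold a. replace (rho + eta + - rho) with eta by ring.
      rewrite Rabs_right by lra. pose proof (cond_pos eps). lra.
    - unfold a; lra. }
  destruct (Hall a b HQa (HM b Hb1)) as [y [Hy Hyl]].
  simpl in Hy.
  set (phi := fun t => c/(t-rho)^2 - c/(r1-rho)^2).
  set (Phi := fun t => - c/(t-rho) - c*t/(r1-rho)^2).
  assert (Hphi : is_RInt phi a b (minus (Phi b) (Phi a))).
  { apply (is_RInt_derive (V:=R_CompleteNormedModule) Phi phi).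
    - intros x Hx. rewrite Rmin_left in Hx by (unfold a; lra).
      rewrite Rmax_right in Hx by (unfold a; lra).
      unfold Phi, phi. auto_derive.
      + unfold a in Hx; lra.
      + field. split; unfold a in Hx; lra.
    - intros x Hx. rewrite Rmin_left in Hx by (unfold a; lra).
      rewrite Rmax_right in Hx by (unfold a; lra).
      apply (ex_derive_continuous (V:=R_NormedModule) phi). unfold phi. auto_derive.
      assert (0 < x + - rho) by (unfold a in Hx; lra). apply Rgt_not_eq. nra. }
  assert (Hle := is_RInt_le phi F a b _ _ ltac:(unfold a; lra) Hphi Hy).
  assert (Hy2 : minus (Phi b) (Phi a) <= y).
  { apply Hle. intros x Hx. unfold phi.
    assert (0 < (r1-rho)^2) by nra.
    assert (0 < c/(r1-rho)^2) by (apply Rdiv_lt_0_compat; lra).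
    destruct (Rle_or_lt x r1) as [Hx1|Hx1].
    - pose proof (Hlow x ltac:(unfold a in Hx; lra)). lra.
    - pose proof (Hpos x ltac:(unfold a in Hx; lra)).
      assert (c/(x-rho)^2 <= c/(r1-rho)^2).
      { unfold Rdiv. apply Rmult_le_compat_l; [lra|].
        apply Rinv_le_contravar; [lra|]. nra. }
      lra. }
  unfold minus, plus, opp in Hy2; simpl in Hy2.
  unfold ball in Hyl; simpl in Hyl; unfold AbsRing_ball, abs, minus, plus, opp in Hyl; simpl in Hyl.
  unfold Phi, a in Hy2.
  replace (rho + eta - rho) with eta in Hy2 by ring.
  assert (HcK : K <= c/eta).
  { apply (Rmult_le_reg_r eta); [lra|]. unfold Rdiv. rewrite Rmult_assoc, Rinv_l by lra.
    apply (Rmult_le_reg_l (/K)); [apply Rinv_0_lt_compat; lra|].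
    rewrite <- Rmult_assoc, Rinv_l by lra. unfold Rdiv in Heta3. lra. }
  assert (Hbr : c/(b-rho) <= c).
  { unfold Rdiv. rewrite <- (Rmult_1_r c) at 2. apply Rmult_le_compat_l; [lra|].
    rewrite <- Rinv_1. apply Rinv_le_contravar; lra. }
  assert (Hba : c*(b - (rho+eta))/(r1-rho)^2 <= c*(b-rho)/(r1-rho)^2).
  { unfold Rdiv. apply Rmult_le_compat_r. apply Rlt_le, Rinv_0_lt_compat; nra. nra. }
  assert (E1 : - c / (b - rho) - c * b / (r1 - rho) ^ 2 + - (- c / eta - c * (rho + eta) / (r1 - rho) ^ 2)
     = c/eta - c/(b-rho) - c*(b - (rho+eta))/(r1-rho)^2) by (field; split; nra).
  rewrite E1 in Hy2.
  unfold K in HcK.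
  pose proof (Rle_abs (y + - l)). pose proof (Rle_abs l).
  clear -Hy2 HcK Hbr Hba H H0 Hyl Hc Heta0. lra. Qed.
Lemma pq_bounds u1 v1 u2 v2 :
  let N := u1*u1+v1*v1+u2*u2+v2*v2 in
  0 <= N /\ Rabs (u1*u2+v1*v2) <= N/2 /\ Rabs (u1*v2-v1*u2) <= N/2.
Proof.
  intros N. unfold N.
  pose proof (Rle_0_sqr (u1+u2)). pose proof (Rle_0_sqr (v1+v2)).
  pose proof (Rle_0_sqr (u1-u2)). pose proof (Rle_0_sqr (v1-v2)).
  pose proof (Rle_0_sqr (u1+v2)). pose proof (Rle_0_sqr (v1+u2)).
  pose proof (Rle_0_sqr (u1-v2)). pose proof (Rle_0_sqr (v1-u2)).
  pose proof (Rle_0_sqr u1). pose proof (Rle_0_sqr u2).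
  pose proof (Rle_0_sqr v1). pose proof (Rle_0_sqr v2).
  unfold Rsqr in *.
  split; [lra|split]; apply Rabs_le; split; lra.
Qed.

Lemma abs_mul_le x y X Y : Rabs x <= X -> Rabs y <= Y -> Rabs (x*y) <= X*Y.
Proof.
  intros. rewrite Rabs_mult. apply Rmult_le_compat; auto using Rabs_pos.
Qed.

Lemma near_ineq (rho omega lambda a k e Q m V0 t u1 v1 u2 v2 : R) :
  0 < m -> 0 < rho -> rho < t -> t - rho <= 1 ->
  V0 = omega * (rho ^ 2 + a ^ 2) + k * a + e * Q * rho ->
  let B := 2 * Rabs omega * (rho + 1) + Rabs (e * Q) in
  let Cc := m * (rho + 1) + Rabs lambda in
  (t - rho) * (2 * B + 4 * Cc + 1) <= Rabs V0 ->
  let N := u1*u1+v1*v1+u2*u2+v2*v2 in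
  let p := u1*u2+v1*v2 in
  let q := u1*v2-v1*u2 in
  let Vt := omega * (t ^ 2 + a ^ 2) + k * a + e * Q * t in
  let Phi := V0 * (Vt * N + 2 * (t - rho) * (m * t * p - lambda * q)) in
  let D := V0 * ((2 * omega * t + e * Q) * N + 2 * (m * t * p - lambda * q) + 2 * (t - rho) * m * p) in
  V0^2 * N / 4 <= Phi /\ Phi <= 2 * V0^2 * N /\ D <= Rabs V0 * (B + Cc + m) * N.
Proof.
  intros Hm Hrho Ht Ht1 HV0 B Cc HD N p q Vt Phi D.
  destruct (pq_bounds u1 v1 u2 v2) as [HN [Hp Hq]]. fold N p q in HN, Hp, Hq.
  set (x := t - rho) in *.
  set (A0 := Rabs V0) in *.
  assert (HA0 : 0 <= A0) by apply Rabs_pos.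
  assert (HV2 : V0^2 = A0^2) by (unfold A0; rewrite pow2_abs; reflexivity).
  assert (HB0 : 0 <= Rabs omega) by apply Rabs_pos.
  assert (HeQ : 0 <= Rabs (e*Q)) by apply Rabs_pos.
  assert (Hl : 0 <= Rabs lambda) by apply Rabs_pos.
  assert (HBpos : 0 <= B) by (unfold B; assert (0 <= Rabs omega * (rho+1)) by (apply Rmult_le_pos; lra); lra).
  assert (HCpos : 0 <= Cc) by (unfold Cc; assert (0 <= m * (rho+1)) by (apply Rmult_le_pos; lra); lra).
  assert (Hx0 : 0 < x) by (unfold x; lra).
  assert (HxB : x * B * 2 <= A0).
  { assert (0 <= x * (4 * Cc + 1)) by (apply Rmult_le_pos; lra). lra. }
  assert (HxC : x * Cc * 4 <= A0).
  { assert (0 <= x * (2 * B + 1)) by (apply Rmult_le_pos; lra). lra. }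
  set (G := omega * (t + rho) + e * Q).
  assert (HG : Rabs G <= B).
  { unfold G, B. eapply Rle_trans; [apply Rabs_triang|].
    rewrite Rabs_mult. rewrite (Rabs_right (t+rho)) by lra.
    assert (0 <= Rabs omega * (2 * (rho + 1) - (t + rho))) by (apply Rmult_le_pos; unfold x in *; lra).
    lra. }
  assert (HVp : Rabs (2 * omega * t + e * Q) <= B).
  { unfold B. eapply Rle_trans; [apply Rabs_triang|].
    rewrite Rabs_mult, Rabs_mult. rewrite (Rabs_right 2) by lra. rewrite (Rabs_right t) by lra.
    assert (0 <= Rabs omega * ((rho + 1) - t)) by (apply Rmult_le_pos; unfold x in *; lra).
    lra. }
  set (S := m * t * p - lambda * q).
  assert (HS : Rabs S <= Cc * N / 2).
  { unfold S, Cc. eapply Rle_trans; [apply Rabs_triang|]. rewrite Rabs_Ropp.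
    assert (Hmt: 0 <= m*t) by (apply Rmult_le_pos; lra).
    assert (m*t <= m*(rho+1)) by (apply Rmult_le_compat_l; unfold x in *; lra).
    assert (H1 : Rabs (m*t*p) <= m*(rho+1)*(N/2)) by (apply abs_mul_le; [rewrite Rabs_right; lra | exact Hp]).
    assert (H2 : Rabs (lambda*q) <= Rabs lambda*(N/2)) by (apply abs_mul_le; [lra|exact Hq]).
    lra. }
  assert (EVt : Vt = V0 + x * G) by (unfold Vt, G, x; rewrite HV0; ring).
  assert (EPhi : Phi = V0^2 * N + V0 * x * G * N + 2 * V0 * x * S).
  { unfold Phi. fold p q S. rewrite EVt. ring. }
  assert (T1 : Rabs (V0 * x * G * N) <= A0^2 * N / 2).
  { rewrite !Rabs_mult. rewrite (Rabs_right x) by lra. rewrite (Rabs_right N) by lra.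
    fold A0.
    assert (0 <= A0*x*N*(B - Rabs G)) by (repeat apply Rmult_le_pos; lra).
    assert (0 <= A0*N*(A0 - x*B*2)) by (repeat apply Rmult_le_pos; lra).
    lra. }
  assert (T2 : Rabs (2 * V0 * x * S) <= A0^2 * N / 4).
  { rewrite !Rabs_mult. rewrite (Rabs_right x) by lra. rewrite (Rabs_right 2) by lra.
    fold A0.
    assert (0 <= A0*x*(Cc * N / 2 - Rabs S)) by (repeat apply Rmult_le_pos; lra).
    assert (0 <= A0*N*(A0 - x*Cc*4)) by (repeat apply Rmult_le_pos; lra).
    lra. }
  pose proof (Rle_abs (V0 * x * G * N)). pose proof (Rle_abs (2 * V0 * x * S)).
  assert (M1 := Rle_abs (- (V0 * x * G * N))). rewrite Rabs_Ropp in M1.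
  assert (M2 := Rle_abs (- (2 * V0 * x * S))). rewrite Rabs_Ropp in M2.
  assert (0 <= A0^2 * N) by (apply Rmult_le_pos; [apply pow2_ge_0|lra]).
  split; [|split].
  - rewrite EPhi, HV2. lra.
  - rewrite EPhi, HV2. lra.
  - unfold D. fold p q S.
    set (Z := (2 * omega * t + e * Q) * N + 2 * S + 2 * x * m * p).
    assert (HZ : Rabs Z <= (B + Cc + m) * N).
    { unfold Z. eapply Rle_trans; [apply Rabs_triang|].
      eapply Rle_trans; [apply Rplus_le_compat_r; apply Rabs_triang|].
      assert (H3 : Rabs ((2 * omega * t + e * Q) * N) <= B * N)
        by (apply abs_mul_le; [exact HVp | rewrite Rabs_right; lra]).
      assert (H4 : Rabs (2 * S) <= Cc * N)
        by (rewrite Rabs_mult, Rabs_right by lra; lra).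
      assert (H5 : Rabs (2 * x * m * p) <= m * N).
      { rewrite !Rabs_mult, (Rabs_right 2), (Rabs_right x), (Rabs_right m) by lra.
        assert (0 <= m * (1 - x) * N) by (repeat apply Rmult_le_pos; unfold x in *; lra).
        assert (0 <= 2 * x * m * (N/2 - Rabs p)) by (repeat apply Rmult_le_pos; lra).
        lra. }
      lra. }
    replace (V0 * ((2 * omega * t + e * Q) * N + 2 * S + 2 * (t - rho) * m * p)) with (V0 * Z) by (unfold Z, x; ring).
    eapply Rle_trans; [apply Rle_abs|]. rewrite Rabs_mult. fold A0.
    rewrite Rmult_assoc. apply Rmult_le_compat_l; lra.
Qed.

Lemma exp_le_mono x y : x <= y -> exp x <= exp y.
Proof. intros H. destruct (Rle_lt_or_eq_dec x y H) as [H'|H'].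
  - left; apply exp_increasing; exact H'.
  - subst; lra. Qed.

Lemma sqnorm_N (f1 f2 : R -> C) t : sqnorm2 (f1 t) (f2 t) = Nf f1 f2 t.
Proof. unfold sqnorm2, Nf, cre, cim. rewrite !Cmod2_alt. unfold Re, Im. ring. Qed.

Lemma N_nonneg f1 f2 t : 0 <= Nf f1 f2 t.
Proof. destruct (pq_bounds (cre f1 t) (cim f1 t) (cre f2 t) (cim f2 t)) as [H _]. exact H. Qed.

Lemma N_pos_of_nz (f1 f2 : R -> C) t : (f1 t <> 0%C \/ f2 t <> 0%C) -> 0 < Nf f1 f2 t.
Proof.
  intros H. unfold Nf, cre, cim.
  destruct (f1 t) as [x1 y1], (f2 t) as [x2 y2]; simpl.
  pose proof (Rle_0_sqr x1). pose proof (Rle_0_sqr y1).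
  pose proof (Rle_0_sqr x2). pose proof (Rle_0_sqr y2). unfold Rsqr in *.
  destruct (Req_dec x1 0); destruct (Req_dec y1 0); destruct (Req_dec x2 0); destruct (Req_dec y2 0);
  subst; try (destruct H as [H|H]; exfalso; apply H; reflexivity);
  try (match goal with | [ h : ?z <> 0 |- _ ] => assert (0 < z * z) by (apply Rsqr_pos_lt; exact h) end; lra).
Qed.

Lemma N_pos_back rho omega lambda a k e Q m f1 f2 t0 rs :
  radial_solution rho omega lambda a k e Q m f1 f2 -> 0 < m -> 0 < rho -> rho < t0 -> t0 <= rs ->
  0 < Nf f1 f2 rs -> 0 < Nf f1 f2 t0.
Proof.
  intros Hs Hm Hrho Ht0 Hrs HN.
  set (K := m * rs + Rabs lambda).
  assert (HK : 0 <= K).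
  { unfold K. pose proof (Rabs_pos lambda). assert (0 <= m*rs) by (apply Rmult_le_pos; lra). lra. }
  set (L := 2 * K / (t0 - rho)).
  assert (HL : 0 <= L) by (unfold L; apply Rmult_le_pos; [lra|]; apply Rlt_le, Rinv_0_lt_compat; lra).
  assert (H := back_gronwall (Nf f1 f2) L t0 rs Hrs).
  assert (Hexp := exp_pos (-(L*(rs-t0)))).
  cut (0 < Nf f1 f2 rs * exp (- (L * (rs - t0)))).
  { intros Hc. apply Rlt_le_trans with (1 := Hc). apply H.
    intros t Ht. eexists; split; [apply (N_deriv _ _ _ _ _ _ _ _ _ _ t Hs ltac:(lra))|].
    destruct (pq_bounds (cre f1 t) (cim f1 t) (cre f2 t) (cim f2 t)) as [HN0 [Hp Hq]].
    fold (Nf f1 f2 t) in HN0, Hp, Hq. fold (pf f1 f2 t) in Hp. fold (qf f1 f2 t) in Hq.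
    set (Y := m * t * qf f1 f2 t + lambda * pf f1 f2 t).
    assert (HY : Y <= K * Nf f1 f2 t / 2).
    { eapply Rle_trans; [apply Rle_abs|]. unfold Y, K.
      eapply Rle_trans; [apply Rabs_triang|].
      assert (m*t <= m*rs) by (apply Rmult_le_compat_l; lra).
      assert (H1 : Rabs (m*t*qf f1 f2 t) <= m*rs*(Nf f1 f2 t/2))
        by (apply abs_mul_le; [rewrite Rabs_right; [lra|]; apply Rle_ge, Rmult_le_pos; lra | exact Hq]).
      assert (H2 : Rabs (lambda*pf f1 f2 t) <= Rabs lambda*(Nf f1 f2 t/2)) by (apply abs_mul_le; [lra|exact Hp]).
      lra. }
    assert (Hi : / (t - rho) <= / (t0 - rho)) by (apply Rinv_le_contravar; lra).
    assert (Hi0 : 0 < / (t - rho)) by (apply Rinv_0_lt_compat; lra).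
    unfold L, Rdiv. 
    assert (0 <= 4 * / (t - rho) * (K * Nf f1 f2 t / 2 - Y)) by (apply Rmult_le_pos; lra).
    assert (0 <= 2 * K * Nf f1 f2 t * (/ (t0 - rho) - / (t - rho))) by (repeat apply Rmult_le_pos; lra).
    lra. }
  apply Rmult_lt_0_compat; lra.
Qed.

Lemma near_facts rho omega lambda a k e Q m V0 f1 f2 t :
  0 < m -> 0 < rho -> rho < t -> t - rho <= 1 ->
  V0 = Vpot omega a k e Q rho ->
  (t - rho) * (2 * (2 * Rabs omega * (rho + 1) + Rabs (e * Q)) + 4 * (m * (rho + 1) + Rabs lambda) + 1) <= Rabs V0 ->
  V0^2 * Nf f1 f2 t / 4 <= Phif rho omega lambda a k e Q m V0 f1 f2 t /\
  Phif rho omega lambda a k e Q m V0 f1 f2 t <= 2 * V0^2 * Nf f1 f2 t /\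
  V0 * ((2 * omega * t + e * Q) * Nf f1 f2 t + 2 * (m * t * pf f1 f2 t - lambda * qf f1 f2 t)
           + 2 * (t - rho) * m * pf f1 f2 t)
   <= Rabs V0 * ((2 * Rabs omega * (rho + 1) + Rabs (e * Q)) + (m * (rho + 1) + Rabs lambda) + m) * Nf f1 f2 t.
Proof.
  intros Hm Hrho Ht Ht1 HV0 HD.
  exact (near_ineq rho omega lambda a k e Q m V0 t (cre f1 t) (cim f1 t) (cre f2 t) (cim f2 t)
           Hm Hrho Ht Ht1 HV0 HD).
Qed.

Theorem mainTheorem4 (M a Q m e k omega : R) :
  0 < M -> M ^ 2 = a ^ 2 + Q ^ 2 ->
  0 < m -> half_integer k ->
  energy_eigenvalue M a Q m e k omega ->
  omega = - (k * a + e * Q * M) / (a ^ 2 + M ^ 2).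
Proof.
  intros HM HM2 Hm Hk Heig.
  destruct Heig as [lambda [f1 [f2 [g1 [g2 [Hrad [[rs [Hrs Hnz]] [_ [_ [Hint _]]]]]]]]]].
  set (V0 := Vpot omega a k e Q M).
  assert (Hden : 0 < a^2 + M^2) by (pose proof (pow2_ge_0 a); assert (0 < M^2) by (apply pow_lt; lra); lra).
  destruct (Req_dec V0 0) as [H0|H0].
  { unfold V0, Vpot in H0. apply Rmult_eq_reg_r with (a^2+M^2); [|lra].
    unfold Rdiv. rewrite Rmult_assoc, Rinv_l by lra. lra. }
  exfalso.
  set (B := 2 * Rabs omega * (M + 1) + Rabs (e * Q)).
  set (Cc := m * (M + 1) + Rabs lambda).
  assert (HBpos : 0 <= B) by (unfold B; pose proof (Rabs_pos omega); pose proof (Rabs_pos (e*Q));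
     assert (0 <= Rabs omega * (M+1)) by (apply Rmult_le_pos; lra); lra).
  assert (HCpos : 0 <= Cc) by (unfold Cc; pose proof (Rabs_pos lambda);
     assert (0 <= m * (M+1)) by (apply Rmult_le_pos; lra); lra).
  set (Dd := 2 * B + 4 * Cc + 1).
  assert (HDd : 0 < Dd) by (unfold Dd; lra).
  assert (HA0 : 0 < Rabs V0) by (apply Rabs_pos_lt; exact H0).
  set (delta := Rmin 1 (Rabs V0 / Dd)).
  assert (Hdel0 : 0 < delta) by (apply Rmin_pos; [lra|apply Rdiv_lt_0_compat; lra]).
  assert (Hdel1 : delta <= 1) by apply Rmin_l.
  assert (Hdel2 : delta * Dd <= Rabs V0).
  { assert (delta <= Rabs V0 / Dd) by apply Rmin_r.
    apply (Rmult_le_compat_r Dd) in H; [|lra]. unfold Rdiv in H.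
    rewrite Rmult_assoc, Rinv_l, Rmult_1_r in H by lra. exact H. }
  set (r1 := Rmin rs (M + delta)).
  assert (Hr1a : r1 <= rs) by apply Rmin_l.
  assert (Hr1b : r1 <= M + delta) by apply Rmin_r.
  assert (Hr1c : M < r1) by (apply Rmin_glb_lt; lra).
  assert (HNrs : 0 < Nf f1 f2 rs) by (apply N_pos_of_nz; exact Hnz).
  assert (HNr1 : 0 < Nf f1 f2 r1) by (apply (N_pos_back M omega lambda a k e Q m f1 f2 r1 rs); auto; lra).
  set (Phi := Phif M omega lambda a k e Q m V0 f1 f2).
  assert (Hnear : forall t, M < t <= r1 ->
     V0^2 * Nf f1 f2 t / 4 <= Phi t /\ Phi t <= 2 * V0^2 * Nf f1 f2 t /\
     V0 * ((2 * omega * t + e * Q) * Nf f1 f2 t + 2 * (m * t * pf f1 f2 t - lambda * qf f1 f2 t)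
           + 2 * (t - M) * m * pf f1 f2 t) <= Rabs V0 * (B + Cc + m) * Nf f1 f2 t).
  { intros t Ht. apply near_facts; try lra; auto.
    fold B Cc Dd.
    assert (0 <= (M + delta - t) * Dd) by (apply Rmult_le_pos; lra). lra. }
  assert (HV2 : 0 < V0^2) by (rewrite <- pow2_abs; apply pow_lt; lra).
  set (K1 := Rabs V0 * (B + Cc + m)).
  assert (HK1 : 0 <= K1) by (unfold K1; apply Rmult_le_pos; lra).
  set (L := K1 * 4 / V0^2).
  assert (HL : 0 <= L) by (unfold L; apply Rmult_le_pos; [lra|]; apply Rlt_le, Rinv_0_lt_compat; lra).
  assert (HPhir1 : 0 < Phi r1).
  { destruct (Hnear r1 ltac:(lra)) as [H1 _].
    assert (0 < V0^2 * Nf f1 f2 r1) by (apply Rmult_lt_0_compat; lra). lra. }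
  set (c1 := Phi r1 * exp (- L) / (2 * V0^2)).
  assert (Hc1 : 0 < c1).
  { unfold c1. apply Rdiv_lt_0_compat; [apply Rmult_lt_0_compat; [lra|apply exp_pos]|lra]. }
  assert (Hlow : forall t, M < t <= r1 -> c1 <= Nf f1 f2 t).
  { intros t Ht.
    assert (Hg := back_gronwall Phi L t r1 ltac:(lra)).
    assert (Hg2 : Phi r1 * exp (- (L * (r1 - t))) <= Phi t).
    { apply Hg. intros s Hs.
      eexists; split; [apply (Phi_deriv M omega lambda a k e Q m V0 f1 f2 s Hrad ltac:(lra))|].
      destruct (Hnear s ltac:(lra)) as [H1 [H2 H3]].
      fold K1 in H3. eapply Rle_trans; [exact H3|].
      assert (E : L * (V0 ^ 2 * Nf f1 f2 s / 4) = K1 * Nf f1 f2 s) by (unfold L; field; lra).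
      assert (0 <= L * (Phi s - V0 ^ 2 * Nf f1 f2 s / 4)) by (apply Rmult_le_pos; lra).
      lra. }
    assert (He : exp (- L) <= exp (- (L * (r1 - t)))).
    { apply exp_le_mono. assert (0 <= L * (1 - (r1 - t))) by (apply Rmult_le_pos; lra). lra. }
    destruct (Hnear t Ht) as [_ [H2 _]].
    assert (Hp : Phi r1 * exp (- L) <= Phi t) by (eapply Rle_trans; [|exact Hg2]; apply Rmult_le_compat_l; lra).
    unfold c1. apply (Rmult_le_reg_r (2 * V0^2)); [lra|].
    unfold Rdiv. rewrite Rmult_assoc, Rinv_l, Rmult_1_r by lra. lra. }
  apply (not_int _ M r1 (c1 * M^2) Hr1c) in Hint; auto.
  - apply Rmult_lt_0_compat; [lra|apply pow_lt; lra].
  - intros t Ht. rewrite sqnorm_N. pose proof (N_nonneg f1 f2 t).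
    unfold Rdiv. apply Rmult_le_pos; [apply Rmult_le_pos; [lra|]|].
    + pose proof (pow2_ge_0 t). pose proof (pow2_ge_0 a). lra.
    + apply Rlt_le, Rinv_0_lt_compat, pow_lt. lra.
  - intros t Ht. rewrite sqnorm_N. pose proof (Hlow t Ht).
    unfold Rdiv. apply Rmult_le_compat_r; [apply Rlt_le, Rinv_0_lt_compat, pow_lt; lra|].
    assert (M^2 <= t^2 + a^2).
    { pose proof (pow2_ge_0 a). assert (M^2 <= t^2) by (apply pow_incr; lra). lra. }
    assert (0 <= M^2) by apply pow2_ge_0.
    apply Rmult_le_compat; lra.
Qed.
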